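(* Let $N\geq 2$ and let $\Sigma$ be the one-sided shift on $\{0,1,\dots,N-1\}^{\mathbb{N}_0}$, ordered lexicographically. Let $\pi\in\mathcal{S}_L$ be a spiralling pattern with $D$ segments $p_1<\dots<p_D$ of lengths $h_1,\dots,h_D$, where $h_1\geq 2$. Then $\pi$ is forbidden for $\Sigma$ if (a) $D\geq N$ and $h_D\geq 2$, or (b) $D\geq N+1$ and $h_D=1$; otherwise $\pi$ is allowed for $\Sigma$.
   Context: $\{0,1,\dots,N-1\}^{\mathbb{N}_0}$ is the set of sequences $\omega=(\omega_0,\omega_1,\dots)$ with $\omega_n\in\{0,\dots,N-1\}$, and $\Sigma(\omega_0,\omega_1,\dots)=(\omega_1,\omega_2,\dots)$; $\omega<\omega'$ lexicographically iff at the first index $n$ where they differ, $\omega_n<\omega'_n$. $\mathcal{S}_L$ is the set of permutations $\pi=[\pi_0,\dots,\pi_{L-1}]$ of $\{0,\dots,L-1\}$. $\omega$ defines $\pi$ if $\Sigma^{\pi_0}(\omega)<\dots<\Sigma^{\pi_{L-1}}(\omega)$; $\pi$ is allowed if some $\omega$ defines it and forbidden otherwise. A partition of $0,1,\dots,L-1$ into $D\geq 2$ segments is a splitting $p_1<p_2<\dots<p_D$ where $p_d$ is the increasing run $e_d,e_d+1,\dots,e_d+h_d-1$ with $h_d\geq1$, $h_1+\dots+h_D=L$, $e_1=0$ and $e_{d+1}=e_d+h_d$. The reversed segment is $\overleftarrow{p_d}=e_d+h_d-1,\dots,e_d+1,e_d$. A spiralling pattern of length $L$ is a pattern of the form $\pi=[\dots,\overleftarrow{p_5},\overleftarrow{p_3},\overleftarrow{p_1},p_2,p_4,\dots]$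 (all odd-indexed segments reversed, placed to the left in decreasing order of index, followed by all even-indexed segments in increasing order of index), or its mirrored pattern $[\dots,\overleftarrow{p_4},\overleftarrow{p_2},p_1,p_3,\dots]$ (even-indexed segments reversed on the left in decreasing order of index, then odd-indexed segments in increasing order of index). *)

(* Defs.v *)
From mathcomp Require Import all_boot.
Set Implicit Arguments. Unset Strict Implicit. Unset Printing Implicit Defensive.

Definition lex_lt (a b : nat -> nat) : Prop :=
  exists n, (forall k, k < n -> a k = b k) /\ a n < b n.

Definition shiftk (k : nat) (w : nat -> nat) : nat -> nat := fun n => w (n + k).

Definition is_word (N : nat) (w : nat -> nat) : Prop := forall n, w n < N.

Definition defines (w : nat -> nat) (pi : seq nat) : Prop :=
  forall i, i.+1 < size pi ->
    lex_lt (shiftk (nth 0 pi i) w) (shiftk (nth 0 pi i.+1) w).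

Definition allowed (N : nat) (pi : seq nat) : Prop :=
  exists w, is_word N w /\ defines w pi.

Definition forbidden (N : nat) (pi : seq nat) : Prop := ~ allowed N pi.

(* Segments of a partition of 0..L-1 given by lengths h = [h_1; ...; h_D]
   (0-indexed: seg h d = p_{d+1} = e_{d+1}, ..., e_{d+1}+h_{d+1}-1). *)
Definition seg (h : seq nat) (d : nat) : seq nat :=
  iota (sumn (take d h)) (nth 0 h d).

(* [..., rev p5, rev p3, rev p1, p2, p4, ...]  (1-indexed odd = 0-indexed even) *)
Definition spiral (h : seq nat) : seq nat :=
  flatten [seq rev (seg h d) | d <- rev [seq d <- iota 0 (size h) | ~~ odd d]] ++
  flatten [seq seg h d | d <- [seq d <- iota 0 (size h) | odd d]].

(* mirrored: [..., rev p4, rev p2, p1, p3, ...] *)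
Definition spiral_mirror (h : seq nat) : seq nat :=
  flatten [seq rev (seg h d) | d <- rev [seq d <- iota 0 (size h) | odd d]] ++
  flatten [seq seg h d | d <- [seq d <- iota 0 (size h) | ~~ odd d]].

Definition spiralling (h : seq nat) (pi : seq nat) : Prop :=
  2 <= size h /\ all (fun x => 0 < x) h /\ (pi = spiral h \/ pi = spiral_mirror h).

(* Main.v *)
Require Import Defs.
From mathcomp Require Import all_boot zify.
Set Implicit Arguments. Unset Strict Implicit. Unset Printing Implicit Defensive.
Lemma lex_first a b : lex_lt a b -> a 0 <= b 0.
Proof. case=> [[|n]] [H1 H2]; first exact: ltnW. by rewrite H1. Qed.

Lemma lex_antisym a b : lex_lt a b -> lex_lt b a -> False.
Proof.
case=> n [H1 H2] [m [H3 H4]].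
case: (ltngtP n m) => [nm|mn|e].
- by move: (H3 _ nm) H2 => ->; rewrite ltnn.
- by move: (H1 _ mn) H4 => ->; rewrite ltnn.
- subst m; lia.
Qed.

Lemma lex_trans a b c : lex_lt a b -> lex_lt b c -> lex_lt a c.
Proof.
case=> n [H1 H2] [m [H3 H4]].
case: (ltngtP n m) => [nm|mn|e].
- exists n; split; first by move=> k kn; rewrite H1 // H3 // (ltn_trans kn nm).
  by rewrite -(H3 _ nm).
- exists m; split; first by move=> k km; rewrite H1 ?H3 // (ltn_trans km mn).
  by rewrite (H1 _ mn).
- subst m; exists n; split; first by move=> k kn; rewrite H1 ?H3.
  exact: ltn_trans H4.
Qed.

Lemma lex_succ w i k : lex_lt (shiftk i w) (shiftk k w) -> w i = w k ->
  lex_lt (shiftk i.+1 w) (shiftk k.+1 w).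
Proof.
rewrite /shiftk; case=> [[|n]] [H1 H2] E; first by move: H2; rewrite !add0n E ltnn.
exists n; split; last by rewrite -!addSnnS.
by move=> j jn; rewrite -!addSnnS; apply: H1.
Qed.

Lemma lex_unsucc w i k : lex_lt (shiftk i.+1 w) (shiftk k.+1 w) -> w i = w k ->
  lex_lt (shiftk i w) (shiftk k w).
Proof.
rewrite /shiftk; case=> n [H1 H2] E; exists n.+1; split; last by rewrite !addSnnS.
by case=> [|j] jn; rewrite ?add0n // !addSnnS; apply: H1.
Qed.

Lemma shiftk0 w i : shiftk i w 0 = w i.
Proof. by rewrite /shiftk add0n. Qed.

Definition key (f : nat -> bool) L i := if f i then L + i else L.-1 - i.
Definition P (f : nat -> bool) L :=
  rev [seq i <- iota 0 L | ~~ f i] ++ [seq i <- iota 0 L | f i].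
Lemma pw_iota L (a : pred nat) : pairwise ltn [seq i <- iota 0 L | a i].
Proof. apply: pairwise_filter; rewrite -sorted_pairwise ?iota_ltn_sorted //; exact: ltn_trans. Qed.
Lemma sorted_P f L : sorted (fun i k => key f L i < key f L k) (P f L).
Proof.
have tr : transitive (fun i k => key f L i < key f L k).
  by move=> ? ? ? ; apply: ltn_trans.
rewrite sorted_pairwise //  /P pairwise_cat; apply/and3P; split.
- apply/allrelP => i k; rewrite mem_rev !mem_filter !mem_iota /key.
  by case/andP=> /negbTE -> ?; case/andP=> -> ?; lia.
- rewrite -sorted_pairwise // rev_sorted sorted_pairwise; last first.
    by move=> ? ? ? /= ? ?; apply: ltn_trans; eauto.
  apply: (sub_in_pairwise (P := [pred i | ~~ f i & i < L])) (pw_iota L (fun i => ~~ f i)).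
    move=> i k /andP[/negbTE fi iL] /andP[/negbTE fk kL] /= ik; rewrite /key fi fk; lia.
  by apply/allP=> i; rewrite mem_filter mem_iota /= => /andP[-> ?]; lia.
- apply: (sub_in_pairwise (P := [pred i | f i & i < L])) (pw_iota L f).
    move=> i k /andP[fi iL] /andP[fk kL] /= ik; rewrite /key fi fk; lia.
  by apply/allP=> i; rewrite mem_filter mem_iota /= => /andP[-> ?]; lia.
Qed.
Definition Rk (f : nat -> bool) L (w : nat -> nat) := forall i k, i < L -> k < L ->
  key f L i < key f L k -> lex_lt (shiftk i w) (shiftk k w).
Lemma key_inj f L i k : i < L -> k < L -> key f L i = key f L k -> i = k.
Proof. rewrite /key; case: (f i); case: (f k); lia. Qed.
Lemma mem_P f L i : (i \in P f L) = (i < L).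
Proof. rewrite /P mem_cat mem_rev !mem_filter mem_iota; case: (f i) => /=; lia. Qed.
Lemma defines_chain w s : defines w s -> forall j k, j < k -> k < size s ->
  lex_lt (shiftk (nth 0 s j) w) (shiftk (nth 0 s k) w).
Proof.
move=> D j; elim=> [|k IH jk ks]; first by rewrite ltn0.
rewrite ltnS leq_eqVlt in jk; case/orP: jk => [/eqP->|jk]; first exact: (D k ks).
exact: lex_trans (IH jk (ltnW ks)) (D k ks).
Qed.

Lemma defines_key f L w : defines w (P f L) <-> Rk f L w.
Proof.
have tr : transitive (fun i k => key f L i < key f L k).
  by move=> ? ? ? ; apply: ltn_trans.
split.
- move=> D i k iL kL ik.
  have iP : i \in P f L by rewrite mem_P.
  have kP : k \in P f L by rewrite mem_P.
  rewrite -(nth_index 0 iP) -(nth_index 0 kP).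
  have ji : index i (P f L) < size (P f L) by rewrite index_mem.
  have jk : index k (P f L) < size (P f L) by rewrite index_mem.
  case: (ltngtP (index i (P f L)) (index k (P f L))) => [lt|gt|eq].
  + exact: defines_chain.
  + have := sorted_ltn_nth tr 0 (sorted_P f L) _ _ jk ji gt.
    rewrite !nth_index //; lia.
  + have : i = k by rewrite -(nth_index 0 iP) -(nth_index 0 kP) eq.
    by move=> e; subst k; rewrite ltnn in ik.
- move=> R i Hi.
  have m1 : nth 0 (P f L) i < L by rewrite -(mem_P f) mem_nth // ltnW.
  have m2 : nth 0 (P f L) i.+1 < L by rewrite -(mem_P f) mem_nth.
  apply: R => //.
  exact: (sortedP 0 (sorted_P f L)).
Qed.
Definition ch (f : nat -> bool) L c := (c.+1 < L) && (f c != f c.+1).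

Lemma mono_w f L w i k : Rk f L w -> i < L -> k < L -> key f L i < key f L k -> w i <= w k.
Proof. move=> R iL kL ik; have := lex_first (R _ _ iL kL ik); by rewrite !shiftk0. Qed.

Lemma strict_w f L w i k : Rk f L w -> i.+1 < L -> k.+1 < L -> key f L i < key f L k ->
  key f L k.+1 < key f L i.+1 -> w i < w k.
Proof.
move=> R iL kL ik ki; rewrite ltn_neqAle (mono_w R (ltnW iL) (ltnW kL) ik) andbT.
apply/negP=> /eqP E.
have H1 := lex_succ (R _ _ (ltnW iL) (ltnW kL) ik) E.
exact: lex_antisym H1 (R _ _ kL iL ki).
Qed.

Lemma iotaS0 n : iota 0 n.+1 = iota 0 n ++ [:: n].
Proof. by rewrite -addn1 iotaD. Qed.

Lemma forb_inv f L N w : f 0 = f 1 -> is_word N w -> Rk f L w ->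
  forall n, n < L -> exists t u, [/\ t <= n, u <= n,
    (forall k, k <= n -> key f L u <= key f L k /\ key f L k <= key f L t) &
    w u + count (ch f L) (iota 0 n.+1) <= w t].
Proof.
move=> f01 W R; elim=> [L0|n IH nL].
  exists 0, 0; split=> //.
    by move=> k; rewrite leqn0 => /eqP->; split.
  suff -> : count (ch f L) (iota 0 1) = 0 by rewrite addn0.
  by rewrite /= /ch f01 eqxx andbF.
have [t [u [tn un Hk Hw]]] := IH (ltnW nL).
rewrite iotaS0 count_cat.
have -> : count (ch f L) [:: n.+1] = ch f L n.+1 by rewrite /= addn0.
case fn: (f n.+1).
- exists n.+1, u; split=> //; first lia.
  + move=> k; rewrite leq_eqVlt ltnS; case/orP=> [/eqP->|kn]; last first.
      split; first by case: (Hk _ kn).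
      by rewrite /key fn; case: (f k); lia.
    split=> //; by rewrite /key fn; case: (f u); lia.
  + have ktn : key f L t < key f L n.+1 by rewrite /key fn; case: (f t); lia.
    have := mono_w R (leq_ltn_trans tn (ltnW nL)) nL ktn.
    case chn: (ch f L n.+1); last by move=> ?; rewrite addn0; lia.
    have /andP[n2L fn2] : (n.+2 < L) && (f n.+1 != f n.+2) := chn.
    rewrite fn eq_sym eqb_id in fn2.
    have : w t < w n.+1.
      apply: (strict_w R _ n2L ktn); first lia.
      by rewrite /key (negbTE fn2); case: (f t.+1); lia.
    rewrite addn1; lia.
- exists t, n.+1; split=> //; first lia.
  + move=> k; rewrite leq_eqVlt ltnS; case/orP=> [/eqP->|kn]; last first.
      split; last by case: (Hk _ kn).
      by rewrite /key fn; case: (f k); lia.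
    split=> //; by rewrite /key fn; case: (f t); lia.
  + have kun : key f L n.+1 < key f L u by rewrite /key fn; case: (f u); lia.
    have := mono_w R nL (leq_ltn_trans un (ltnW nL)) kun.
    case chn: (ch f L n.+1); last by move=> ?; rewrite addn0; lia.
    have /andP[n2L fn2] : (n.+2 < L) && (f n.+1 != f n.+2) := chn.
    have {}fn2 : f n.+2 by move: fn2; rewrite fn; case: (f n.+2).
    have : w n.+1 < w u.
      apply: (strict_w R n2L _ kun); first lia.
      by rewrite /key fn2; case: (f u.+1); lia.
    rewrite addn1; lia.
Qed.

Lemma top_lemma N w a : is_word N w -> lex_lt (shiftk a w) (shiftk a.+1 w) -> w a = N.-1 -> False.
Proof.
move=> W [n [H1 H2]] Wa.
have E : forall j, j <= n -> w (j + a) = N.-1.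
  elim=> [|j IHj] jn; first by rewrite add0n.
  rewrite -(IHj (ltnW jn)); move: (H1 j jn); rewrite /shiftk => ->; by rewrite addSnnS.
move: H2; rewrite /shiftk (E n (leqnn n)); have := W (n + a.+1); lia.
Qed.

Lemma forbidden_dir f L N w : 2 <= L -> f 0 = f 1 -> f L.-1 = true -> is_word N w -> Rk f L w ->
  count (ch f L) (iota 0 L) + 1 + (f L.-2 == f L.-1) <= N.
Proof.
move=> L2 f01 fL W R.
have [t [u [tn un Hk Hw]]] := forb_inv f01 W R (ltac:(lia) : L.-1 < L).
have e : L.-1.+1 = L by lia.
rewrite e in Hw.
have := W t; case fL2: (f L.-2); last by rewrite fL; lia.
rewrite fL /=.
have [t' [u' [tn' un' Hk' Hw']]] := forb_inv f01 W R (ltac:(lia) : L.-2 < L).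
have e2 : iota 0 L = iota 0 L.-2.+1 ++ [:: L.-1].
  have -> : L.-1 = L.-2.+1 by lia.
  rewrite -iotaS0; congr iota; lia.
have c0 : ch f L L.-1 = false by rewrite /ch; apply/negbTE; lia.
rewrite e2 count_cat.
have -> : count (ch f L) [:: L.-1] = 0 by rewrite /= c0.
have kt : key f L t' = key f L L.-2.
  apply/eqP; rewrite eqn_leq; case: (Hk' L.-2 (leqnn _)) => _ ->.
  by rewrite /key fL2; case: (f t'); lia.
have tt : t' = L.-2 by apply: key_inj kt; lia.
subst t'.
have k12 : key f L L.-2 < key f L L.-1 by rewrite /key fL fL2; lia.
have m12 := mono_w (i:=L.-2) (k:=L.-1) R (ltac:(lia)) (ltac:(lia)) k12.
have : w L.-2 < N.-1.
  have := W L.-1.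
  case E: (w L.-2 == w L.-1).
    move/eqP: E => E.
    have H := lex_succ (R L.-2 L.-1 (ltac:(lia)) (ltac:(lia)) k12) E.
    have e3 : L.-2.+1 = L.-1 by lia.
    rewrite e3 in H.
    case E2 : (w L.-1 == N.-1); first by move/eqP: E2 => /(top_lemma W H).
    move/negbT: E2; lia.
  move/negbT: E; lia.
lia.
Qed.
Lemma cnt_mono (a : pred nat) m n : m <= n -> count a (iota 0 m) <= count a (iota 0 n).
Proof. move=> mn; rewrite -(subnKC mn) iotaD count_cat; exact: leq_addr. Qed.

Lemma cnt_strict (a : pred nat) m n c : m <= c -> c < n -> a c ->
  count a (iota 0 m) < count a (iota 0 n).
Proof.
move=> mc cn ac; have mn : m <= n by lia.
rewrite -(subnKC mn) iotaD count_cat -[X in X < _]addn0 ltn_add2l -has_count add0n.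
apply/hasP; exists c => //; rewrite mem_iota; lia.
Qed.

Lemma count_split (a b : pred nat) s :
  count (fun c => a c && b c) s + count (fun c => a c && ~~ b c) s = count a s.
Proof. elim: s => //= x s IH; case: (a x); case: (b x) => /=; lia. Qed.

Definition Uc f L n := count (fun c => ch f L c && f c) (iota 0 n.+1).
Definition Vc f L n := count (fun c => ch f L c && ~~ f c) (iota 0 n.+1).
Definition lev f L i := if f i then Vc f L L.-1 + Uc f L i else Vc f L L.-1 - Vc f L i.
Definition wcon f L N n := if n < L then lev f L n else N.-1.

Lemma Uc_le f L i : i < L -> Uc f L i <= Uc f L L.-1.
Proof. move=> iL; apply: cnt_mono; lia. Qed.
Lemma Vc_le f L i : i < L -> Vc f L i <= Vc f L L.-1.
Proof. move=> iL; apply: cnt_mono; lia. Qed.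

Lemma UVtot f L : 0 < L -> Uc f L L.-1 + Vc f L L.-1 = count (ch f L) (iota 0 L).
Proof. move=> L0; rewrite /Uc /Vc count_split; congr count; congr iota; lia. Qed.

Lemma mono_lev f L i k : i < L -> k < L -> key f L i < key f L k -> lev f L i <= lev f L k.
Proof.
move=> iL kL; rewrite /key /lev.
have := Vc_le f iL; have := Vc_le f kL.
case fi: (f i); case fk: (f k) => ? ? ik.
- rewrite leq_add2l; apply: cnt_mono; lia.
- lia.
- lia.
- have : Vc f L k <= Vc f L i by apply: cnt_mono; lia.
  lia.
Qed.

Lemma succ_lev f L i k : i.+1 < L -> k.+1 < L -> key f L i < key f L k ->
  lev f L i = lev f L k -> key f L i.+1 < key f L k.+1.
Proof.
move=> iL kL; rewrite /key /lev.
have := Vc_le f (ltnW iL); have := Vc_le f (ltnW kL).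
case fi: (f i); case fk: (f k) => Vk Vi ik E.
-
  have ik' : i < k by lia.
  case fk1: (f k.+1); last first.
    have : Uc f L i < Uc f L k.
      apply: (cnt_strict (c:=k)); rewrite // /ch kL fk fk1 //.
    lia.
  case: (f i.+1); lia.
- lia.
-
  case fk1: (f k.+1); last first.
    have : 0 < Uc f L k.
      have := cnt_strict (a := fun c => ch f L c && f c) (m:=0) (n:=k.+1) (c:=k).
      rewrite /ch kL fk fk1 /=; move=> H; exact: H.
    lia.
  case fi1: (f i.+1); last by lia.
  have : 0 < Vc f L i.
    have := cnt_strict (a := fun c => ch f L c && ~~ f c) (m:=0) (n:=i.+1) (c:=i).
    rewrite /ch iL fi fi1 /=; move=> H; exact: H.
  lia.
-
  have ki : k < i by lia.
  case fi1: (f i.+1).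
    have : Vc f L k < Vc f L i.
      apply: (cnt_strict (c:=i)); rewrite // /ch iL fi fi1 //.
    lia.
  case: (f k.+1); lia.
Qed.
Lemma tail_lex N w L j : is_word N w -> (forall n, L <= n -> w n = N.-1) ->
  (exists m, j <= m /\ w m < N.-1) -> lex_lt (shiftk j w) (shiftk L w).
Proof.
move=> W T [m [jm wm]].
have exP : exists n, w (n + j) < N.-1 by exists (m - j); rewrite subnK.
case: (ex_minnP exP) => n Hn Hmin.
exists n; split.
- move=> k kn; rewrite /shiftk (T (k + L)); last by lia.
  have := W (k + j); case E: (w (k + j) < N.-1); last by lia.
  by have := Hmin _ E; lia.
- rewrite /shiftk (T (n + L)) //; lia.
Qed.

Lemma allowed_dir f L N : 2 <= L -> f L.-1 = true -> 2 <= N ->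
  count (ch f L) (iota 0 L) + 1 + (f L.-2 == f L.-1) <= N ->
  is_word N (wcon f L N) /\ Rk f L (wcon f L N).
Proof.
move=> L2 fL N2 HK.
have tot := UVtot f (ltac:(lia) : 0 < L).
have levb : forall i, i < L -> lev f L i <= count (ch f L) (iota 0 L).
  move=> i iL; rewrite /lev; have := Uc_le f iL; case: (f i); lia.
have W : is_word N (wcon f L N).
  move=> n; rewrite /wcon; case: ifP => nL; last by lia.
  have := levb _ nL; lia.
split=> //.
have lev2 : lev f L L.-2 < N.-1.
  move: HK; rewrite /lev fL; case fL2: (f L.-2) => /= HK.
    have := Uc_le f (ltac:(lia) : L.-2 < L); lia.
  have : 0 < Vc f L L.-2.
    have H := cnt_strict (a := fun c => ch f L c && ~~ f c) (m:=0) (n:=L.-2.+1) (c:=L.-2)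
      (leq0n _) (ltnSn _).
    apply: H; have e : L.-2.+1 = L.-1 by lia.
    rewrite /ch e fL fL2 /=; lia.
  have := Vc_le f (ltac:(lia) : L.-2 < L); lia.
have wE : forall i, i < L -> wcon f L N i = lev f L i by move=> i iL; rewrite /wcon iL.
suff H : forall m i k, i < L -> k < L -> L - i <= m -> key f L i < key f L k ->
  lex_lt (shiftk i (wcon f L N)) (shiftk k (wcon f L N)).
  by move=> i k iL kL; apply: (H L) => //; lia.
elim=> [|m IH] i k iL kL Lm ik; first by lia.
have mo := mono_lev iL kL ik.
case: (ltnP (lev f L i) (lev f L k)) => lt.
  by exists 0; split=> //; rewrite !shiftk0 !wE.
have E : lev f L i = lev f L k by lia.
have iL1 : i.+1 < L.
  case: (ltnP i.+1 L) => // H; have ei : i = L.-1 by lia.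
  subst i; move: ik; rewrite /key fL; case: (f k); lia.
apply: lex_unsucc; last by rewrite !wE.
case: (ltnP k.+1 L) => kL1.
  apply: IH => //; first lia.
  exact: succ_lev.
have ek : k = L.-1 by lia.
have -> : k.+1 = L by lia.
apply: (tail_lex W).
  by move=> n Ln; rewrite /wcon ltnNge Ln.
case: (leqP i.+1 L.-2) => ii.
  exists L.-2; split; first lia.
  by rewrite wE //; lia.
exists L.-1; split; first lia.
have ei : i = L.-2 by lia.
by rewrite wE; [rewrite -ek -E ei | lia].
Qed.
Lemma Rk_compl f g L N w : (forall i, g i = ~~ f i) -> is_word N w -> Rk f L w ->
  Rk g L (fun n => N.-1 - w n).
Proof.
move=> gf W R i k iL kL gik.
have fki : key f L k < key f L i.
  move: gik; rewrite /key !gf; case: (f i); case: (f k) => /=; lia.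
case: (R _ _ kL iL fki) => n [H1 H2].
exists n; split; rewrite /shiftk.
- by move=> j jn; have := H1 j jn; rewrite /shiftk => ->.
- move: H2; rewrite /shiftk; have := W (n + i); lia.
Qed.

Lemma is_word_compl N w : is_word N w -> 0 < N -> is_word N (fun n => N.-1 - w n).
Proof. move=> _ N0 n; lia. Qed.

Definition Kb f L := count (ch f L) (iota 0 L) + 1 + (f L.-2 == f L.-1).

Lemma Kb_compl f g L : (forall i, g i = ~~ f i) -> Kb g L = Kb f L.
Proof.
move=> gf; rewrite /Kb !gf.
have -> : count (ch g L) (iota 0 L) = count (ch f L) (iota 0 L).
  by apply: eq_count => c; rewrite /ch !gf; case: (f c); case: (f c.+1).
by case: (f L.-2); case: (f L.-1).
Qed.

Lemma keythm_true f L N : 2 <= L -> 2 <= N -> f 0 = f 1 -> f L.-1 = true ->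
  (exists w, is_word N w /\ Rk f L w) <-> Kb f L <= N.
Proof.
move=> L2 N2 f01 fL; split.
- by case=> w [W R]; apply: forbidden_dir.
- move=> HK; exists (wcon f L N); exact: allowed_dir.
Qed.

Lemma keythm f L N : 2 <= L -> 2 <= N -> f 0 = f 1 ->
  (exists w, is_word N w /\ Rk f L w) <-> Kb f L <= N.
Proof.
move=> L2 N2 f01; case fL: (f L.-1); first exact: keythm_true.
set g := fun i => ~~ f i.
have gf : forall i, g i = ~~ f i by [].
have fg : forall i, f i = ~~ g i by move=> i; rewrite gf negbK.
have g01 : g 0 = g 1 by rewrite !gf f01.
have gL : g L.-1 = true by rewrite gf fL.
have := keythm_true L2 N2 g01 gL.
rewrite (Kb_compl L gf) => <-; split.
- case=> w [W R]; exists (fun n => N.-1 - w n); split.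
  + apply: is_word_compl => //; lia.
  + exact: Rk_compl R.
- case=> w [W R]; exists (fun n => N.-1 - w n); split.
  + apply: is_word_compl => //; lia.
  + exact: Rk_compl R.
Qed.
Fixpoint blk (h : seq nat) (i : nat) : nat :=
  match h with [::] => 0 | x :: h' => if i < x then 0 else (blk h' (i - x)).+1 end.

Lemma seg0 x h : seg (x :: h) 0 = iota 0 x.
Proof. by []. Qed.

Lemma segS x h d : seg (x :: h) d.+1 = map (addn x) (seg h d).
Proof. by rewrite /seg /= -iotaDl. Qed.

Lemma filter_const (Q : pred nat) (b : bool) s : (forall i, i \in s -> Q i = b) ->
  filter Q s = if b then s else [::].
Proof.
move=> H; case: b H => H.
- by rewrite (eq_in_filter (a2 := predT) H) filter_predT.
- by rewrite (eq_in_filter (a2 := pred0) H) filter_pred0.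
Qed.

Lemma seg_filter h (Q : pred nat) :
  flatten [seq seg h d | d <- [seq d <- iota 0 (size h) | Q d]] =
  [seq i <- iota 0 (sumn h) | Q (blk h i)].
Proof.
elim: h Q => [|x h IH] Q //=.
have E1 : iota 1 (size h) = map S (iota 0 (size h)).
  transitivity (map (addn 1) (iota 0 (size h))); first by rewrite -iotaDl.
  by apply: eq_map.
have E3 : iota x (sumn h) = map (addn x) (iota 0 (sumn h)) by rewrite -iotaDl addn0.
rewrite E1 filter_map iotaD add0n E3 filter_cat filter_map.
rewrite (filter_const (s := iota 0 x) (b := Q 0)); last first.
  by move=> i; rewrite mem_iota => /andP[_ ix]; rewrite ix.
have E2 : forall J, flatten [seq seg (x :: h) d | d <- map S J] =
   map (addn x) (flatten [seq seg h d | d <- J]).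
  by move=> J; rewrite map_flatten -!map_comp; congr flatten; apply: eq_map => d /=; rewrite segS.
have E4 : [seq i <- iota 0 (sumn h) | preim (addn x) (fun i : nat => Q (if i < x then 0 else (blk h (i - x)).+1)) i]
  = [seq i <- iota 0 (sumn h) | Q (blk h i).+1].
  by apply: eq_filter => i /=; rewrite ltnNge leq_addr /= addKn.
rewrite E4 -(IH (fun d => Q d.+1)).
case: (Q 0) => /=; last exact: E2.
by rewrite seg0 E2.
Qed.

Lemma revflat h (S : seq nat) :
  flatten [seq rev (seg h d) | d <- rev S] = rev (flatten [seq seg h d | d <- S]).
Proof. by rewrite rev_flatten -map_comp map_rev. Qed.

Lemma spiral_P h : spiral h = P (fun i => odd (blk h i)) (sumn h).
Proof.
rewrite /spiral /P revflat.
by rewrite (seg_filter h (fun d => ~~ odd d)) (seg_filter h odd).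
Qed.

Lemma mirror_P h : spiral_mirror h = P (fun i => ~~ odd (blk h i)) (sumn h).
Proof.
rewrite /spiral_mirror /P revflat.
rewrite (seg_filter h odd) (seg_filter h (fun d => ~~ odd d)).
by congr (rev _ ++ _); apply: eq_filter => i; rewrite negbK.
Qed.
Definition pos (h : seq nat) := all (fun x => 0 < x) h.

Lemma blk0 h : pos h -> blk h 0 = 0.
Proof. by case: h => //= x h /andP[-> _]. Qed.

Lemma blk_step h c : pos h -> c.+1 < sumn h ->
  blk h c.+1 = blk h c \/ blk h c.+1 = (blk h c).+1.
Proof.
elim: h c => [|x h IH] c //= /andP[x0 ph] cS.
case: (ltnP c.+1 x) => c1x.
  by rewrite (ltnW c1x); left.
case: (ltnP c x) => cx.
  have e : c.+1 = x by lia.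
  by rewrite e subnn blk0 //; right.
have e : c.+1 - x = (c - x).+1 by lia.
rewrite e; case: (IH (c - x) ph ltac:(lia)) => ->; by [left|right].
Qed.

Lemma blk_last h : pos h -> h != [::] -> blk h (sumn h).-1 = (size h).-1.
Proof.
elim: h => [|x h IH] //= /andP[x0 ph] _.
case: h IH ph => [|y h] IH ph /=.
  by rewrite addn0 ltn_predL x0.
have y0 : 0 < y by case/andP: ph.
rewrite ltnNge (_ : x <= (x + (y + sumn h)).-1); last by lia.
have e : (x + (y + sumn h)).-1 - x = (sumn (y :: h)).-1 by rewrite /=; lia.
by rewrite /= e; move: (IH ph is_true_true); rewrite /= => ->.
Qed.

Lemma sumn_pos0 h : pos h -> sumn h = 0 -> h = [::].
Proof. by case: h => //= x h /andP[x0 _]; lia. Qed.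

Lemma blk_lt x h i : i < x -> blk (x :: h) i = 0.
Proof. by move=> ix; rewrite /= ix. Qed.
Lemma blk_ge x h i : x <= i -> blk (x :: h) i = (blk h (i - x)).+1.
Proof. by move=> ix; rewrite /= ltnNge ix. Qed.

Lemma blk_last2 h : pos h -> 2 <= sumn h ->
  (blk h (sumn h).-2 == blk h (sumn h).-1) = (2 <= last 0 h).
Proof.
elim: h => [|x h IH] // /andP[x0 ph] S2.
case: h IH ph S2 => [|y h] IH ph S2.
  have sx : sumn [:: x] = x by rewrite /= addn0.
  rewrite sx in S2 *; rewrite !blk_lt; [|lia|lia].
  by rewrite eqxx /=; apply/esym.
have y0 : 0 < y by case/andP: ph.
have sS : sumn [:: x, y & h] = x + sumn (y :: h) by [].
rewrite sS in S2 *.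
have lS : last 0 [:: x, y & h] = last 0 (y :: h) by [].
rewrite lS.
case: (ltnP 1 (sumn (y :: h))) => S'.
  rewrite (@blk_ge x (y :: h) (x + sumn (y :: h)).-2); last by lia.
  rewrite (@blk_ge x (y :: h) (x + sumn (y :: h)).-1); last by lia.
  have e1 : (x + sumn (y :: h)).-2 - x = (sumn (y :: h)).-2 by lia.
  have e2 : (x + sumn (y :: h)).-1 - x = (sumn (y :: h)).-1 by lia.
  by rewrite e1 e2 eqSS IH.
have sy : sumn (y :: h) = y + sumn h by [].
have y1 : y = 1 by lia.
have h0 : h = [::].
  apply: sumn_pos0; [by case/andP: ph | lia].
subst y h.
have e : sumn [:: 1] = 1 by [].
rewrite e blk_lt; last by lia.
rewrite blk_ge; last by lia.
by [].
Qed.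

Lemma tele (g : nat -> nat) n : (forall c, c < n -> g c.+1 = g c \/ g c.+1 = (g c).+1) ->
  g n = g 0 + count (fun c => g c.+1 != g c) (iota 0 n).
Proof.
elim: n => [|n IH] H; first by rewrite addn0.
rewrite iotaS0 count_cat /= addn0 addnA -IH; last by move=> c cn; apply: H; lia.
case: (H n (ltnSn n)) => ->; rewrite ?eqxx ?addn0 //.
by rewrite (_ : (g n).+1 != g n) ?addn1 //; apply/eqP; lia.
Qed.

Lemma count_ch h : pos h -> h != [::] ->
  count (ch (fun i => odd (blk h i)) (sumn h)) (iota 0 (sumn h)) = (size h).-1.
Proof.
move=> ph hn.
have L0 : 0 < sumn h.
  case: h ph hn => //= x h /andP[x0 _] _; lia.
have E : iota 0 (sumn h) = iota 0 (sumn h).-1 ++ [:: (sumn h).-1].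
  by rewrite -iotaS0 prednK.
rewrite E count_cat.
have -> : count (ch (fun i => odd (blk h i)) (sumn h)) [:: (sumn h).-1] = 0.
  by rewrite /= /ch prednK // ltnn.
rewrite addn0.
rewrite -(blk_last ph hn) (tele (g := blk h) (n := (sumn h).-1)); last first.
  by move=> c cn; apply: blk_step => //; lia.
rewrite blk0 // add0n; apply: eq_in_count => c; rewrite mem_iota => /andP[_ cL].
rewrite /ch (_ : c.+1 < sumn h) /=; last by lia.
case: (blk_step ph (ltac:(lia) : c.+1 < sumn h)) => ->.
  by rewrite !eqxx.
rewrite /=; case: (odd (blk h c)) => /=; apply/esym/eqP; lia.
Qed.

Lemma sumn_ge h : 2 <= nth 0 h 0 -> 2 <= sumn h.
Proof. case: h => //= x h; lia. Qed.
Lemma f01_h h : 2 <= nth 0 h 0 -> blk h 0 = blk h 1.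
Proof. case: h => //= x h x2; have -> : 0 < x by lia. by rewrite x2. Qed.
Lemma last_pos h : pos h -> h != [::] -> 0 < last 0 h.
Proof.
case/lastP: h => // s x ph _.
rewrite last_rcons; move/allP: ph; apply; by rewrite mem_rcons mem_head.
Qed.

Lemma lst_h h : pos h -> 2 <= sumn h ->
  (odd (blk h (sumn h).-2) == odd (blk h (sumn h).-1)) = (2 <= last 0 h).
Proof.
move=> ph S2; rewrite -blk_last2 //.
have e : (sumn h).-1 = (sumn h).-2.+1 by lia.
have hc : (sumn h).-2.+1 < sumn h by lia.
have := blk_step ph hc; rewrite -e; case=> ->.
  by rewrite !eqxx.
set b := blk h _.
have -> : odd b.+1 = ~~ odd b by [].
have -> : (b == b.+1) = false by apply/eqP; lia.
by case: (odd b).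
Qed.

Unset Implicit Arguments.

Theorem lemma1 (N : nat) (h pi : seq nat) :
  2 <= N ->
  spiralling h pi ->
  2 <= nth 0 h 0 ->
  (forbidden N pi <->
     ((N <= size h /\ 2 <= last 0 h) \/ (N.+1 <= size h /\ last 0 h = 1))).
Proof.
move=> N2 [D2 [ph hpi]] h1.
have ph' : pos h := ph.
have hn : h != [::] by case: h D2 {ph ph' hpi h1}.
set f := fun i => odd (blk h i).
set L := sumn h.
have L2 : 2 <= L by exact: sumn_ge.
have f01 : f 0 = f 1 by rewrite /f f01_h.
have cnt : count (ch f L) (iota 0 L) = (size h).-1 by exact: count_ch.
have lst : (f L.-2 == f L.-1) = (2 <= last 0 h).
  exact: lst_h.
have l1 : 0 < last 0 h by exact: last_pos.
have key1 : forall g, (forall i, g i = f i) \/ (forall i, g i = ~~ f i) ->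
   (forbidden N (P g L) <-> ~ (Kb f L <= N)).
  move=> g Hg.
  have g01 : g 0 = g 1 by case: Hg => Hg; rewrite !Hg f01.
  have KK : Kb g L = Kb f L.
    case: Hg => Hg; last exact: Kb_compl.
    by rewrite /Kb !Hg; congr (_ + _ + _); apply: eq_count => c; rewrite /ch !Hg.
  rewrite /forbidden /allowed -KK -(keythm L2 N2 g01).
  split=> H1 H2; apply: H1; case: H2 => w [W D]; exists w; split => //.
  - by apply/defines_key.
  - by apply/defines_key.
have Kf : Kb f L = (size h).-1 + 1 + (2 <= last 0 h) by rewrite /Kb cnt lst.
have main : forbidden N pi <-> ~ (Kb f L <= N).
  case: hpi => ->.
  - rewrite spiral_P; apply: key1; by left.
  - rewrite mirror_P; apply: key1; by right.
rewrite main Kf; case: (leqP 2 (last 0 h)) => l2 /=; split.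
- move=> H; left; split=> //; lia.
- case=> [[H _]|[_ H]]; lia.
- move=> H; right; split; lia.
- case=> [[_ H]|[H _]]; lia.
Qed.
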